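(* Let $n\ge1$ and $\mathbf{x}\in\{0,1\}^n$. Let $\omega=\omega(\mathbf{x}')$, let $m$ be the number of 1-runs in $\mathbf{x}'$ and $m_1$ the number of these of length $1$. For $j=0,1,2,3,4$ let $A_j$ be the number of $\mathbf{y}\in\Phi_2(\mathbf{x})$ with $\omega(\mathbf{y}')=\omega-j$. Then (a) $A_0+A_1=1+m+\binom{m}{2}$; (b) $A_2+A_3=(\omega-m)(m+1)-(m-m_1)$; (c) $A_4=\binom{\omega-m}{2}-(\omega-m)+(m-m_1)$.
   Context: A grain pattern of length $n$ is a subset $E\subseteq\{2,\dots,n\}$ containing no two consecutive integers. For such $E$, $\phi_E:\{0,1\}^n\to\{0,1\}^n$ sends $\mathbf{x}=(x_1,\dots,x_n)$ to $\mathbf{y}$ with $y_j=x_{j-1}$ if $j\in E$ and $y_j=x_j$ otherwise. $\Phi_t(\mathbf{x})=\{\phi_E(\mathbf{x}): E \text{ a grain pattern of length } n,\ |E|\le t\}$ (a set). The derivative sequence of $\mathbf{x}$ is $\mathbf{x}'=(x'_2,\dots,x'_n)$ with $x'_j=x_{j-1}\oplus x_j$ (mod 2); $\omega(\cdot)$ is Hamming weight; a 1-run of $\mathbf{x}'$ is a maximal block of consecutive 1s. Binomial coefficients $\binom{a}{b}$ are $0$ when $b>a\ge0$. *)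

(* Defs.v *)
(* Binary vectors of length n are n.-tuple bool; coordinate
   x_j (1-based, paper) is tnth x (j-1) (0-based here). *)
From mathcomp Require Import all_boot all_order all_algebra.
Set Implicit Arguments. Unset Strict Implicit. Unset Printing Implicit Defensive.

Definition grain_pattern (n : nat) (E : {set 'I_n}) : bool :=
  [forall i : 'I_n, (i \in E) ==>
     ((0 < i)%N && [forall j : 'I_n, (j \in E) ==> (nat_of_ord j != i.+1)])].

Definition phiE (n : nat) (E : {set 'I_n}) (x : n.-tuple bool) : n.-tuple bool :=
  [tuple (if i \in E then nth false x i.-1 else tnth x i) | i < n].

Definition Phi (n t : nat) (x : n.-tuple bool) : {set n.-tuple bool} :=
  [set y | [exists E : {set 'I_n},
              [&& grain_pattern E, (#|E| <= t)%N & y == phiE E x]]].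

Definition deriv_seq (s : seq bool) : seq bool :=
  [seq (nth false s i) (+) (nth false s i.+1) | i <- iota 0 (size s).-1].

Definition weight (s : seq bool) : nat := count id s.

(* Number of 1-runs (maximal blocks of consecutive 1s): count their starting
   positions, i.e. positions i with s_i = 1 and (i = 0 or s_{i-1} = 0). *)
Definition run_start (s : seq bool) (i : nat) : bool :=
  nth false s i && ((i == 0%N) || ~~ nth false s i.-1).
Definition run_end (s : seq bool) (i : nat) : bool :=
  nth false s i && ((i.+1 == size s) || ~~ nth false s i.+1).

Definition num_runs (s : seq bool) : nat :=
  count (run_start s) (iota 0 (size s)).

Definition num_runs1 (s : seq bool) : nat :=
  count (fun i => run_start s i && run_end s i) (iota 0 (size s)).

(* Main.v *)
Require Import Defs.
From mathcomp Require Import all_boot all_order all_algebra.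
From mathcomp Require Import zify.
Set Implicit Arguments. Unset Strict Implicit. Unset Printing Implicit Defensive.


Lemma iotaSr m N : iota m N.+1 = iota m N ++ [:: m + N].
Proof. by rewrite -addn1 iotaD. Qed.

Lemma count_iota_sum (p : pred nat) N : count p (iota 0 N) = \sum_(k < N) p k.
Proof.
elim: N => [|N IH]; first by rewrite big_ord0.
by rewrite big_ord_recr -IH iotaSr count_cat /= addn0.
Qed.

Lemma count_add (p q r : pred nat) s :
  (forall k, k \in s -> p k + q k = r k) -> count p s + count q s = count r s.
Proof.
elim: s => [|a s IH] H //=.
have := H a (mem_head _ _); have := IH (fun k hk => H k (mem_behead (s:=a::s) hk)).
lia.
Qed.

Lemma count_shift (f : pred nat) N :
  count (fun k => (0 < k) && f k.-1) (iota 0 N.+1) = count f (iota 0 N).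
Proof.
elim: N => [|N IH] //.
by rewrite iotaSr count_cat IH [in RHS]iotaSr count_cat /= !addn0.
Qed.

Lemma count_shift' (f : pred nat) N :
  f N.-1 = false ->
  count (fun k => (0 < k) && f k.-1) (iota 0 N) = count f (iota 0 N).
Proof.
case: N => [|N] H; first by [].
by rewrite count_shift iotaSr count_cat /= H !addn0.
Qed.


Section S.
Variable n' : nat.
Variable x : n'.+1.-tuple bool.

Definition X k := nth false x k.
Definition b k := nth false (deriv_seq x) k.

Lemma size_d : size (deriv_seq x) = n'.
Proof. by rewrite /deriv_seq size_map size_iota size_tuple. Qed.

Lemma bE k : b k = (k < n') && (X k (+) X k.+1).
Proof.
rewrite /b /deriv_seq size_tuple /=; case: ltnP => h.
  by rewrite (nth_map 0) ?size_iota // nth_iota.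
by rewrite nth_default // size_map size_iota.
Qed.

Lemma b_ge k : n' <= k -> b k = false.
Proof. by rewrite bE; case: ltnP. Qed.

Definition w0 := count b (iota 0 n').
Definition z0 := count (fun k => b k && ~~ b k.+1) (iota 0 n').
Definition c0 := count (fun k => b k && b k.+1) (iota 0 n').
Definition r0 := count (fun k => [&& b k, b k.+1 & ~~ b k.+2]) (iota 0 n').
Definition q0 := count (fun k => [&& b k, b k.+1 & b k.+2]) (iota 0 n').

Lemma weightE : weight (deriv_seq x) = w0.
Proof.
by rewrite /weight -{1}(mkseq_nth false (deriv_seq x)) /mkseq count_map size_d.
Qed.

Lemma wE : w0 = c0 + z0.
Proof.
rewrite /w0 /c0 /z0; symmetry; apply: count_add => k _ /=.
by case: (b k); case: (b k.+1).
Qed.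

Lemma cE : c0 = q0 + r0.
Proof.
rewrite /q0 /c0 /r0; symmetry; apply: count_add => k _ /=.
by case: (b k); case: (b k.+1); case: (b k.+2).
Qed.

Lemma bn' : b n' = false.
Proof. by rewrite b_ge. Qed.

Lemma runsE : num_runs (deriv_seq x) = z0.
Proof.
have H1 : count (run_start (deriv_seq x)) (iota 0 n') +
   count (fun k => (0 < k) && (fun j => b j && b j.+1) k.-1) (iota 0 n') = w0.
  apply: count_add => k _; rewrite /run_start -/(b k) -/(b k.-1).
  case: k => [|k] /=; first by case: (b 0).
  by case: (b k); case: (b k.+1).
rewrite (@count_shift' (fun j => b j && b j.+1)) in H1; last first.
  by rewrite (b_ge (leqSpred _)) /= andbF.
rewrite /num_runs size_d; have := wE; rewrite /c0; lia.
Qed.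

Lemma runs1E : num_runs1 (deriv_seq x) + r0 = z0.
Proof.
have H1 : count (fun k => run_start (deriv_seq x) k && run_end (deriv_seq x) k) (iota 0 n') +
   count (fun k => (0 < k) && (fun j => [&& b j, b j.+1 & ~~ b j.+2]) k.-1) (iota 0 n') = z0.
  apply: count_add => k; rewrite mem_iota add0n => /andP [_ hk].
  rewrite /run_start /run_end -/(b k) -/(b k.-1) -/(b k.+1) size_d.
  have -> : (k.+1 == n') || ~~ b k.+1 = ~~ b k.+1 by case: eqVneq => // ->; rewrite bn'.
  case: k {hk} => [|k] /=; first by case: (b 0); case: (b 1).
  by case: (b k); case: (b k.+1); case: (b k.+2).
rewrite (@count_shift' (fun j => [&& b j, b j.+1 & ~~ b j.+2])) in H1; last first.
  by rewrite (b_ge (leqSpred _)) /= andbF.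
by rewrite /num_runs1 size_d.
Qed.

End S.


Section T.
Variable n' : nat.
Variable x : n'.+1.-tuple bool.
Local Notation n := n'.+1.
Local Notation b := (b x).

Definition P := [set i : 'I_n | (0 < i) && b i.-1].
Definition C := [set i : 'I_n | [&& 0 < i, b i.-1 & b i]].
Definition Z := [set i : 'I_n | [&& 0 < i, b i.-1 & ~~ b i]].
Definition AdjC := [set a : 'I_n | (a \in C) && (ordS a \in C)].
Definition AdjZ := [set a : 'I_n | (a \in C) && (ordS a \in Z)].

Lemma card_shift (f : pred nat) (A : {set 'I_n}) :
  (forall i : 'I_n, (i \in A) = (0 < i) && f i.-1) -> #|A| = count f (iota 0 n').
Proof.
move=> H; rewrite -count_shift count_iota_sum -sum1_card big_mkcond /=.
by apply: eq_bigr => i _; rewrite H; case: (_ && _).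
Qed.

Lemma b_lt k : b k -> k < n'.
Proof. by rewrite bE; case/andP. Qed.

Lemma ordSE (a : 'I_n) : a < n' -> val (ordS a) = a.+1.
Proof. by move=> h; rewrite /= modn_small. Qed.

Lemma cardP : #|P| = w0 x.
Proof. by apply: card_shift => i; rewrite inE. Qed.

Lemma cardC : #|C| = c0 x.
Proof. apply: card_shift => i; rewrite inE; by case: i => [[|i] hi]. Qed.

Lemma cardZ : #|Z| = z0 x.
Proof. apply: card_shift => i; rewrite inE; by case: i => [[|i] hi]. Qed.

Lemma inAdjC (a : 'I_n) : (a \in AdjC) = (0 < a) && [&& b a.-1, b a.-1.+1 & b a.-1.+2].
Proof.
rewrite !inE; case: a => [[|a] ha] /=; first by [].
case hb: (b a.+1); last by rewrite !andbF.
have h2 : a.+2 < n by have := b_lt hb.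
by rewrite modn_small //= hb !andbT.
Qed.

Lemma inAdjZ (a : 'I_n) : (a \in AdjZ) = (0 < a) && [&& b a.-1, b a.-1.+1 & ~~ b a.-1.+2].
Proof.
rewrite !inE; case: a => [[|a] ha] /=; first by [].
case hb: (b a.+1); last by rewrite !andbF.
have h2 : a.+2 < n by have := b_lt hb.
by rewrite modn_small //= hb !andbT.
Qed.

Lemma cardAdjC : #|AdjC| = q0 x.
Proof. exact: card_shift inAdjC. Qed.

Lemma cardAdjZ : #|AdjZ| = r0 x.
Proof. exact: card_shift inAdjZ. Qed.

End T.


Section W.
Variable n' : nat.
Variable x : n'.+1.-tuple bool.
Local Notation n := n'.+1.

Lemma grainP (E : {set 'I_n}) : grain_pattern E ->
  forall i, i \in E -> 0 < i /\ forall j, j \in E -> nat_of_ord j != (nat_of_ord i).+1.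
Proof.
move=> /forallP g i hi; have /implyP/(_ hi)/andP [h1 /forallP h2] := g i.
by split=> // j hj; have /implyP := h2 j; apply.
Qed.

Lemma grainI (E : {set 'I_n}) : (forall i, i \in E -> 0 < i) ->
  (forall i j, i \in E -> j \in E -> nat_of_ord j != (nat_of_ord i).+1) -> grain_pattern E.
Proof.
move=> h1 h2; apply/forallP => i; apply/implyP => hi; rewrite h1 //=.
by apply/forallP => j; apply/implyP; apply: h2.
Qed.

Lemma tnth_phiE (E : {set 'I_n}) (y : n.-tuple bool) i :
  tnth (phiE E y) i = if i \in E then nth false y i.-1 else tnth y i.
Proof. by rewrite tnth_mktuple. Qed.

Lemma inP (i : 'I_n) : (i \in P x) = (0 < i) && (nth false x i.-1 != tnth x i).
Proof.
rewrite inE bE /X (tnth_nth false); case: i => [[|i] hi] //=.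
by rewrite (_ : i < n') //; case: (nth _ _ _); case: (nth _ _ _).
Qed.

Definition T := [set E : {set 'I_n} | [&& grain_pattern E, #|E| <= 2 & E \subset P x]].

Lemma phiE_inj : {in T &, injective (fun E => phiE E x)}.
Proof.
move=> E F; rewrite !inE => /and3P [_ _ sE] /and3P [_ _ sF] h.
apply/setP => i; have := congr1 (fun t => tnth t i) h; rewrite /= !tnth_phiE.
case hE: (i \in E); case hF: (i \in F) => //.
  by have := subsetP sE i hE; rewrite inP => /andP [_ /eqP].
by have := subsetP sF i hF; rewrite inP => /andP [_ /eqP] ? /esym.
Qed.

Lemma PhiE : Phi 2 x = (fun E => phiE E x) @: T.
Proof.
apply/setP => y; rewrite inE; apply/existsP/imsetP.
  move=> [E /and3P [g c /eqP ->]]; exists (E :&: P x).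
    rewrite inE subsetIr andbT; apply/andP; split.
      have gE := grainP g; apply: grainI => [i|i j]; rewrite !inE.
        by case/andP => /gE [].
      by case/andP => /gE [_ h] _ /andP [hj _]; apply: h.
    exact: leq_trans (subset_leq_card (subsetIl _ _)) c.
  apply: eq_from_tnth => i; rewrite !tnth_phiE inE.
  case hE: (i \in E) => //=; case hP: (i \in P x) => //.
  by move: hP; rewrite inP (proj1 (grainP g hE)) /= => /negbFE /eqP.
move=> [E]; rewrite inE => /and3P [g c _] ->; exists E.
by rewrite g c eqxx.
Qed.


Lemma weight_phiE (E : {set 'I_n}) : grain_pattern E -> E \subset P x ->
  weight (deriv_seq (phiE E x)) + 2 * #|E :&: C x| + (ord_max \in E) = w0 x.
Proof.
move=> g sE; have gE := grainP g.
pose en k := (inord k : 'I_n) \in E.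
have Yk k : k < n -> X (phiE E x) k = if en k then X x k.-1 else X x k.
  by move=> hk; rewrite /X -(inordK hk) -!tnth_nth tnth_phiE /en inord_val.
have en_pos k : k < n -> en k -> 0 < k.
  by move=> hk /gE [+ _]; rewrite inordK.
have en_b k : k < n -> en k -> b x k.-1.
  by move=> hk /(subsetP sE); rewrite inE inordK // => /andP [].
have en_nn k : k.+1 < n -> en k -> en k.+1 -> false.
  move=> hk h1 h2; have [_ /(_ _ h2)] := gE _ h1.
  by rewrite /= !inordK ?eqxx // ltnW.
have key k : k < n' -> b (phiE E x) k + en k.+1 + (en k && b x k) + (en k && b x k) = b x k + en k.
  move=> hk; have hk1 : k < n := ltnW hk.
  rewrite !bE hk !andTb (Yk k.+1 hk) (Yk k hk1).
  case e1: (en k.+1); case e0: (en k).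
  - by have := en_nn k hk e0 e1.
  - have := en_b k.+1 hk e1; rewrite bE hk /=.
    by case: (X x k); case: (X x k.+1).
  - have := en_b _ hk1 e0; have := en_pos _ hk1 e0.
    case: k hk hk1 e0 e1 => [|k] //= hk _ _ _ _; rewrite bE (ltnW hk) /=.
    by case: (X x k); case: (X x k.+1); case: (X x k.+2).
  - by case: (X x k); case: (X x k.+1).
have S : \sum_(k < n') b (phiE E x) k + \sum_(k < n') en k.+1 + \sum_(k < n') (en k && b x k) + \sum_(k < n') (en k && b x k) =
         \sum_(k < n') b x k + \sum_(k < n') en k.
  by rewrite -!big_split; apply: eq_bigr => j _; exact: key (ltn_ord j).
have S0 : \sum_(i < n') 0 = 0 by rewrite big1.
have cE : #|E| = \sum_(k < n) en k.
  rewrite -sum1_card big_mkcond /=; apply: eq_bigr => i _.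
  by rewrite /en inord_val; case: (i \in E).
have cE1 := cE; rewrite big_ord_recl /= in cE1.
have e0 : en 0 = false by case e: (en 0) => //; have := en_pos 0 isT e.
have {cE1} cE1 : #|E| = \sum_(i < n') en i.+1.
  by rewrite cE1 e0 add0n; apply: eq_bigr => i _; rewrite /bump add1n.
rewrite big_ord_recr /= in cE.
have cC : #|E :&: C x| = \sum_(k < n') (en k && b x k).
  rewrite -sum1_card big_mkcond big_ord_recr /=.
  have -> : (ord_max \in E :&: C x) = false by rewrite !inE /= (b_ge x (leqnn n')) !andbF.
  rewrite addn0; apply: eq_bigr => i _.
  set j := widen_ord _ i; have -> : j = inord i by apply/val_inj; rewrite /= inordK // ltnS ltnW.
  rewrite !inE -/(en i) inordK; last exact: (leq_trans (ltn_ord i) (leqnSn _)).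
  case e: (en i) => //=.
  by rewrite (en_pos _ (ltnW (ltn_ord _)) e) (en_b _ (ltnW (ltn_ord _)) e); case: (b x i).
have em : (ord_max \in E) = en n' by rewrite /en (_ : inord n' = ord_max) //; apply/val_inj; rewrite /= inordK.
rewrite (weightE (phiE E x)) /w0 count_iota_sum cC em.
rewrite count_iota_sum.
set a := \sum_(k < n') b (phiE E x) k in S *.
set B := \sum_(k < n') en k.+1 in S cE1 *.
set c := \sum_(k < n') (en k && b x k) in S *.
set e := \sum_(k < n') en k in S cE *.
set d := \sum_(k < n') b x k in S *.
set f := #|E| in cE cE1.
lia.
Qed.

End W.


Lemma cards_le (U : finType) (B : {set U}) k :
  #|[set A : {set U} | A \subset B & #|A| <= k]| = \sum_(i < k.+1) 'C(#|B|, i).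
Proof.
elim: k => [|k IH].
  rewrite big_ord1 -cards_draws; apply: eq_card => A; rewrite !inE leqn0 //.
rewrite big_ord_recr /= -IH -cards_draws.
have -> : [set A : {set U} | A \subset B & #|A| <= k.+1] =
  [set A : {set U} | A \subset B & #|A| <= k] :|: [set A : {set U} | A \subset B & #|A| == k.+1].
  apply/setP => A; rewrite !inE leq_eqVlt ltnS.
  by case: (A \subset B); case: (_ == _); case: (_ <= _).
rewrite cardsU (_ : _ :&: _ = set0) ?cards0 ?subn0 //.
apply/setP => A; rewrite !inE.
case: (A \subset B) => //=; apply/negP => /andP [h /eqP e]; by rewrite e ltnn in h.
Qed.

Section Cnt.
Variable n' : nat.
Variable x : n'.+1.-tuple bool.
Local Notation n := n'.+1.
Local Notation b := (b x).
Local Notation P := (P x).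
Local Notation C := (C x).
Local Notation Z := (Z x).
Local Notation T := (T x).

Lemma P_pos i : i \in P -> 0 < i.
Proof. by rewrite inE => /andP []. Qed.
Lemma CP i : i \in C -> i \in P.
Proof. by rewrite !inE => /and3P [-> ->]. Qed.
Lemma ZP i : i \in Z -> i \in P.
Proof. by rewrite !inE => /and3P [-> ->]. Qed.
Lemma PCZ i : i \in P -> (i \in C) || (i \in Z).
Proof. by rewrite !inE => /andP [-> ->] /=; case: (b i). Qed.
Lemma CZ i : i \in C -> i \in Z -> False.
Proof. by rewrite !inE => /and3P [_ _ ->] /and3P []. Qed.
Lemma Zadj i j : i \in Z -> j \in P -> nat_of_ord j != (nat_of_ord i).+1.
Proof.
rewrite !inE => /and3P [_ _ hi] /andP [_ hj]; apply/eqP => e.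
by move: hj; rewrite e /= (negbTE hi).
Qed.
Lemma C_lt i : i \in C -> i < n'.
Proof. by rewrite !inE => /and3P [_ _ /b_lt]. Qed.
Lemma CS i : i \in C -> nat_of_ord (ordS i) = (nat_of_ord i).+1.
Proof. by move=> /C_lt; apply: ordSE. Qed.
Lemma Cnext i : i \in C -> ordS i \in P.
Proof. by move=> h; rewrite inE (CS h) /=; move: h; rewrite !inE => /and3P []. Qed.

Definition f2 (a : 'I_n) := [set a; ordS a].

Lemma f2_card a : a \in C -> #|f2 a| = 2.
Proof.
move=> h; rewrite cards2; suff -> : a != ordS a by [].
apply/eqP => e; have := congr1 (@nat_of_ord _) e; rewrite (CS h) => /eqP; by rewrite eqn_leq ltnn andbF.
Qed.

Lemma f2_inj : {in C &, injective f2}.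
Proof.
move=> a a' ha ha' e.
have h1 : a \in f2 a' by rewrite -e !inE eqxx.
have h2 : a' \in f2 a by rewrite e !inE eqxx.
move: h1 h2; rewrite !inE => /orP [/eqP // | /eqP e1] /orP [/eqP // | /eqP e2].
have := congr1 (@nat_of_ord _) e1; have := congr1 (@nat_of_ord _) e2; rewrite (CS ha) (CS ha'); move=> h3 h4; exfalso; move: h3 h4; lia.
Qed.

Lemma grain_f2 a (E : {set 'I_n}) : a \in C -> f2 a \subset E -> grain_pattern E -> False.
Proof.
move=> h s g; have ha : a \in E by apply: (subsetP s); rewrite !inE eqxx.
have hb : ordS a \in E by apply: (subsetP s); rewrite !inE eqxx orbT.
have [_ /(_ _ hb)] := grainP g ha; by rewrite (CS h) eqxx.
Qed.


Lemma cnt0 : #|[set E in T | #|E :&: C| == 0]| = 1 + #|Z| + 'C(#|Z|, 2).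
Proof.
have -> : [set E in T | #|E :&: C| == 0] = [set A : {set 'I_n} | A \subset Z & #|A| <= 2].
  apply/setP => E; rewrite !inE; apply/idP/idP.
  - case/andP => /and3P [g c s] /eqP /cards0_eq e0; rewrite c andbT.
    apply/subsetP => i hi; have := PCZ (subsetP s i hi); case/orP => // hc.
    have : i \in E :&: C by rewrite inE hi hc.
    by rewrite e0 inE.
  - case/andP => s c; rewrite c /=.
    have sP : E \subset P by apply/subsetP => i /(subsetP s) /ZP.
    rewrite sP andbT; apply/andP; split.
      apply: grainI => [i /(subsetP sP) /P_pos // | i j hi hj].
      exact: Zadj (subsetP s i hi) (subsetP sP j hj).
    rewrite cards_eq0; apply/eqP/setP => i; rewrite in_setI in_set0; apply/negbTE/negP => /andP [hi hc].
    exact: CZ hc (subsetP s i hi).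
by rewrite cards_le !big_ord_recr big_ord0 /= bin0 bin1.
Qed.


Lemma cnt2 : #|[set E in T | #|E :&: C| == 2]| + #|AdjC x| = 'C(#|C|, 2).
Proof.
set D := [set A : {set 'I_n} | A \subset C & #|A| == 2].
set I := f2 @: AdjC x.
have inAC a : a \in AdjC x -> a \in C by rewrite inE => /andP [].
have sI : I \subset D.
  apply/subsetP => _ /imsetP [a ha ->]; move: ha; rewrite inE => /andP [ha hb].
  rewrite inE f2_card // eqxx andbT; apply/subsetP => i.
  by rewrite !in_setU !in_set1 => /orP [] /eqP ->.
have cI : #|I| = #|AdjC x|.
  by apply: card_in_imset => a a' ha ha'; apply: f2_inj; apply: inAC.
have -> : [set E in T | #|E :&: C| == 2] = D :\: I.
  apply/setP => E; rewrite in_setD [E \in D]inE [E \in [set _ in _ | _]]inE [E \in T]inE.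
  apply/idP/idP.
  - case/andP => /and3P [g c s] /eqP e2.
    have eC : E :&: C = E.
      by apply/eqP; rewrite eqEcard subsetIl e2.
    have sC : E \subset C by apply/setIidPl.
    have cE2 : #|E| == 2 by rewrite -eC e2.
    rewrite sC cE2 andbT.
    rewrite andbT; apply/negP; rewrite /I => /imsetP [a ha eE]; move: ha; rewrite inE => /andP [ha _].
    apply: (grain_f2 ha _ g); by rewrite -eE.
  - case/andP => nI /andP [sC /eqP c2].
    have sP : E \subset P by apply/subsetP => i /(subsetP sC) /CP.
    rewrite sP c2 /= (setIidPl sC) c2 eqxx andbT.
    rewrite andbT; apply: grainI => [i /(subsetP sP) /P_pos // | i j hi hj]; apply/eqP => ej.
    have hiC := subsetP sC i hi; have hjC := subsetP sC j hj.
    have ej' : j = ordS i by apply: ord_inj; rewrite (CS hiC) ej.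
    have aI : i \in AdjC x by rewrite inE hiC -ej'.
    have eE : E = f2 i.
      apply/eqP; rewrite eq_sym eqEcard c2 f2_card // leqnn andbT.
      by apply/subsetP => k; rewrite !in_setU !in_set1 => /orP [] /eqP ->; rewrite -?ej'.
    by move: nI; rewrite eE (imset_f f2 aI).
rewrite cardsD (setIidPr sI) cI subnK; last by rewrite -cI; apply: subset_leq_card.
by rewrite /D cards_draws.
Qed.


Lemma eA (A B : {set 'I_n}) : A \subset C -> B \subset Z -> (A :|: B) :&: C = A.
Proof.
move=> h0 h1; apply/setP => i; rewrite in_setI in_setU; case hA: (i \in A).
  by rewrite (subsetP h0 i hA).
by rewrite /=; apply/negbTE/negP => /andP [hB hC]; exact: CZ hC (subsetP h1 i hB).
Qed.

Lemma eB (A B : {set 'I_n}) : A \subset C -> B \subset Z -> (A :|: B) :\: C = B.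
Proof.
move=> h0 h1; apply/setP => i; rewrite in_setD in_setU; case hB: (i \in B).
  rewrite orbT andbT; apply/negP => hC; exact: CZ hC (subsetP h1 i hB).
by rewrite orbF; case hA: (i \in A); rewrite ?(subsetP h0 i hA) ?andbF.
Qed.

Lemma cnt1 : #|[set E in T | #|E :&: C| == 1]| + #|AdjZ x| = #|C| * (1 + #|Z|).
Proof.
set S1 := [set A : {set 'I_n} | A \subset C & #|A| == 1].
set S2 := [set A : {set 'I_n} | A \subset Z & #|A| <= 1].
set U := (fun p : {set 'I_n} * {set 'I_n} => p.1 :|: p.2) @: setX S1 S2.
set I := f2 @: AdjZ x.
have inAZ a : a \in AdjZ x -> a \in C by rewrite inE => /andP [].
have cU : #|U| = #|C| * (1 + #|Z|).
  rewrite card_in_imset; last first.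
    move=> [A B] [A' B']; rewrite !inE /= => /andP [/andP [sA _] /andP [sB _]].
    move=> /andP [/andP [sA' _] /andP [sB' _]] e.
    by congr pair; [rewrite -(eA sA sB) -(eA sA' sB') e | rewrite -(eB sA sB) -(eB sA' sB') e].
  rewrite cardsX /S1 cards_draws bin1 /S2 cards_le !big_ord_recr big_ord0 /= bin0 bin1.
  by rewrite add0n.
have sI : I \subset U.
  apply/subsetP => _ /imsetP [a ha ->]; move: ha; rewrite inE => /andP [ha hb].
  apply/imsetP; exists ([set a], [set ordS a]) => //.
  by rewrite !inE /= !sub1set ha hb !cards1.
have cI : #|I| = #|AdjZ x|.
  by apply: card_in_imset => a a' ha ha'; apply: f2_inj; apply: inAZ.
have -> : [set E in T | #|E :&: C| == 1] = U :\: I.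
  apply/setP => E; rewrite in_setD [E \in [set _ in _ | _]]inE [E \in T]inE.
  apply/idP/idP.
  - case/andP => /and3P [g c s] /eqP e1.
    apply/andP; split.
      apply/negP; rewrite /I => /imsetP [a ha eE]; move: ha; rewrite inE => /andP [ha _].
      by apply: (grain_f2 ha _ g); rewrite -eE.
    apply/imsetP; exists (E :&: C, E :\: C); last by rewrite /= setID.
    rewrite !inE /= subsetIr e1 eqxx /=.
    apply/andP; split.
      apply/subsetP => i; rewrite in_setD => /andP [hnC hi].
      by have := PCZ (subsetP s i hi); rewrite (negbTE hnC).
    have := cardsID C E; rewrite e1 => h; by rewrite -(leq_add2l 1) h.
  - case/andP => nI /imsetP [[A B]]; rewrite !inE /= => /andP [/andP [sA cA] /andP [sB cB]] eE.
    have sP : E \subset P.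
      rewrite eE subUset; apply/andP; split; apply/subsetP => i.
        by move/(subsetP sA)/CP.
      by move/(subsetP sB)/ZP.
    rewrite sP eE (eA sA sB) cA andbT -eE.
    apply/andP; split.
      apply: grainI => [i /(subsetP sP) /P_pos // | i j hi hj]; apply/eqP => ej.
      move: hi; rewrite eE in_setU => /orP [hiA | hiB]; last first.
        by have := Zadj (subsetP sB i hiB) (subsetP sP j hj); rewrite ej eqxx.
      have hiC := subsetP sA i hiA.
      move: hj; rewrite eE in_setU => /orP [hjA | hjB].
        case/cards1P: cA => a ea; move: hiA hjA ej; rewrite ea !in_set1 => /eqP -> /eqP ->.
        by move/eqP; rewrite eqn_leq ltnn andbF.
      have ej' : j = ordS i by apply: ord_inj; rewrite (CS hiC) ej.
      have aI : i \in AdjZ x by rewrite inE hiC -ej' (subsetP sB j hjB).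
      have eA' : A = [set i] by case/cards1P: cA => a ea; move: hiA; rewrite ea in_set1 => /eqP ->.
      have eB' : B = [set j].
        by apply/eqP; rewrite eq_sym eqEcard sub1set hjB cards1 cB.
      by move: nI; rewrite eE eA' eB' ej' (imset_f f2 aI).
    rewrite andbT eE cardsU; move/eqP: cA => ->; apply: leq_trans (leq_subr _ _) _; by rewrite (ltnS _ 1).
rewrite cardsD (setIidPr sI) cI subnK; first exact: cU.
by rewrite -cI; apply: subset_leq_card.
Qed.

End Cnt.

Import GRing.Theory Num.Theory.

Lemma card_split (U : finType) (S : {set U}) (p q r : pred U) :
  (forall E, E \in S -> p E + q E = r E) ->
  #|[set E in S | p E]| + #|[set E in S | q E]| = #|[set E in S | r E]|.
Proof.
move=> H; rewrite -!sum1_card !(big_mkcond (fun E => E \in _)) -big_split /=.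
apply: eq_bigr => E _; rewrite !inE; case hS: (E \in S) => //=.
have := H E hS; by case: (p E); case: (q E); case: (r E).
Qed.

Section Fin.
Variable n' : nat.
Variable x : n'.+1.-tuple bool.
Local Notation n := n'.+1.

Definition g (E : {set 'I_n}) := 2 * #|E :&: C x| + (ord_max \in E).

Lemma Aj j : #|[set y in Phi 2 x | ((weight (deriv_seq y))%:Z == (weight (deriv_seq x))%:Z - j%:Z)%R]|
  = #|[set E in T x | g E == j]|.
Proof.
rewrite PhiE.
have -> : [set y in (fun E => phiE E x) @: T x | ((weight (deriv_seq y))%:Z == (weight (deriv_seq x))%:Z - j%:Z)%R]
   = (fun E => phiE E x) @: [set E in T x | g E == j].
  apply/setP => y; rewrite inE; apply/andP/imsetP.
    move=> [/imsetP [E hE ->] hw]; exists E => //; rewrite inE hE /=.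
    move: hE hw; rewrite inE => /and3P [gE _ sE].
    rewrite (weightE x) -(weight_phiE gE sE) /g !PoszD eq_sym subr_eq -!PoszD eqz_nat.
    by rewrite -addnA eqn_add2l.
  move=> [E]; rewrite inE => /andP [hE hg] ->; split; first exact: imset_f.
  move: hE; rewrite inE => /and3P [gE _ sE].
  rewrite (weightE x) -(weight_phiE gE sE) /g !PoszD eq_sym subr_eq -!PoszD eqz_nat.
  by rewrite -addnA eqn_add2l.
rewrite card_in_imset // => E F; rewrite [E \in _]inE [F \in _]inE => /andP [hE _] /andP [hF _].
exact: phiE_inj.
Qed.

Lemma max_notin E : E \in T x -> #|E :&: C x| = 2 -> (ord_max \in E) = false.
Proof.
rewrite inE => /and3P [_ c _] e2.
have eC : E :&: C x = E by apply/eqP; rewrite eqEcard subsetIl e2.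
apply/negbTE/negP => h; have : ord_max \in E :&: C x by rewrite eC.
by rewrite in_setI inE /= (b_ge x (leqnn n')) !andbF.
Qed.

End Fin.

Unset Implicit Arguments.
Import GRing.Theory Num.Theory.
Local Open Scope ring_scope.

Theorem lemma4p3 (n : nat) (x : n.-tuple bool) :
  (1 <= n)%N ->
  let w := weight (deriv_seq x) in
  let m := num_runs (deriv_seq x) in
  let m1 := num_runs1 (deriv_seq x) in
  let A := fun j : nat =>
    #|[set y in Phi 2 x | (weight (deriv_seq y))%:Z == w%:Z - j%:Z]| in
  [/\ ((A 0%N + A 1%N)%:Z = 1 + m%:Z + ('C(m, 2))%:Z),
      ((A 2%N + A 3%N)%:Z = (w%:Z - m%:Z) * (m%:Z + 1) - (m%:Z - m1%:Z))
    & ((A 4%N)%:Z = ('C(w - m, 2))%:Z - (w%:Z - m%:Z) + (m%:Z - m1%:Z))].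
Proof.
case: n x => [|n'] x // _ w m m1 A.
have hA j : A j = #|[set E in T x | g x E == j]| by rewrite /A /w Aj.
have k2le E : E \in T x -> (#|E :&: C x| <= 2)%N.
  rewrite inE => /and3P [_ c _]; exact: leq_trans (subset_leq_card (subsetIl _ _)) c.
have h01 : (A 0%N + A 1%N = #|[set E in T x | #|E :&: C x| == 0%N]|)%N.
  rewrite !hA; apply: card_split => E hE; rewrite /g.
  rewrite mul2n; case: (ord_max \in E); case: #|_| => [|[|[|k]]] //=; by rewrite !doubleS ?addn1.
have h23 : (A 2%N + A 3%N = #|[set E in T x | #|E :&: C x| == 1%N]|)%N.
  rewrite !hA; apply: card_split => E hE; rewrite /g.
  rewrite mul2n; case: (ord_max \in E); case: #|_| => [|[|[|k]]] //=; by rewrite !doubleS ?addn1.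
have h4 : (A 4%N = #|[set E in T x | #|E :&: C x| == 2%N]|)%N.
  rewrite hA; apply: eq_card => E; rewrite [E \in [set _ in _ | g x _ == _]]inE [E \in [set _ in _ | _ == _]]inE; case hE: (E \in T x) => //=.
  rewrite /g; case e2: (#|E :&: C x| == 2%N).
    by rewrite (eqP e2) (max_notin hE (eqP e2)).
  have := k2le E hE; move: e2.
  rewrite mul2n; case: (ord_max \in E); case: #|_| => [|[|[|k]]] //=; by rewrite !doubleS ?addn1.
have k0 := cnt0 x; have k1 := cnt1 x; have k2 := cnt2 x.
rewrite cardZ in k0 k1; rewrite cardC in k1 k2; rewrite cardAdjZ in k1; rewrite cardAdjC in k2.
have hw : w = (c0 x + z0 x)%N by rewrite /w weightE wE.
have hm : m = z0 x by rewrite /m runsE.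
have hm1 := runs1E x; rewrite -/m1 in hm1.
have hc := cE x.
have hwm : (w - m = c0 x)%N by rewrite hw hm addnK.
rewrite hwm h01 h23 h4 k0 hm.
move: k1 k2; set AA := #|_|; set BB := #|_|.
rewrite hw; move=> e1 e2; split; [by rewrite !PoszD | nia | lia].
Qed.
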